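(* Let $(G,* )$ be a metrizable topological group with no isolated points. Then $G$ has ${\sf S}_c(\mathcal{O}_{\sf nbd},\mathcal{O})$ if and only if $G$ has ${\sf S}_c(\mathcal{O}_{\sf nbd},\Lambda)$.
   Context: For a topological group $(G,* )$ with identity $e$ and a neighborhood $U$ of $e$, $\mathcal{O}(U)=\{x*U:x\in G\}$ and $\mathcal{O}_{\sf nbd}=\{\mathcal{O}(U):U\text{ a neighborhood of }e\}$. $\mathcal{O}$ is the collection of all open covers. An open cover is large if each point is contained in infinitely many elements of the cover; $\Lambda$ denotes the collection of large open covers. A family $\mathcal{B}$ refines $\mathcal{A}$ if every member of $\mathcal{B}$ is contained in some member of $\mathcal{A}$. ${\sf S}_c(\mathcal{A},\mathcal{B})$: for each sequence $(A_n:n<\infty)$ of elements of $\mathcal{A}$ there is a sequence $(B_n:n<\infty)$ such that each $B_n$ is a pairwise disjoint family of open sets refining $A_n$ and $\bigcup_nB_n\in\mathcal{B}$. *)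

(* Defs.v *)
From Stdlib Require Import Reals List.
Open Scope R_scope.

Definition set (X : Type) := X -> Prop.
Definition setfam (X : Type) := set (set X).

Definition set_eq {X} (A B : set X) : Prop := forall x, A x <-> B x.
Definition subset {X} (A B : set X) : Prop := forall x, A x -> B x.

Definition is_topology {X : Type} (open : setfam X) : Prop :=
  open (fun _ => True) /\
  (forall F : setfam X, (forall U, F U -> open U) ->
      open (fun x => exists U, F U /\ U x)) /\
  (forall U V, open U -> open V -> open (fun x => U x /\ V x)).

Definition is_topological_group {X : Type} (open : setfam X)
  (mul : X -> X -> X) (inv : X -> X) (e : X) : Prop :=
  is_topology open /\
  (forall x y z, mul x (mul y z) = mul (mul x y) z) /\
  (forall x, mul e x = x /\ mul x e = x) /\
  (forall x, mul (inv x) x = e /\ mul x (inv x) = e) /\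
  (* continuity of multiplication G x G -> G (product topology) *)
  (forall (W : set X) x y, open W -> W (mul x y) ->
     exists U V, open U /\ open V /\ U x /\ V y /\
       (forall u v, U u -> V v -> W (mul u v))) /\
  (forall W : set X, open W -> open (fun x => W (inv x))).

Definition metrizable {X : Type} (open : setfam X) : Prop :=
  exists d : X -> X -> R,
    (forall x y, 0 <= d x y) /\
    (forall x y, d x y = 0 <-> x = y) /\
    (forall x y, d x y = d y x) /\
    (forall x y z, d x z <= d x y + d y z) /\
    (forall U : set X, open U <->
       (forall x, U x -> exists eps, 0 < eps /\ forall y, d x y < eps -> U y)).

Definition no_isolated_points {X : Type} (open : setfam X) : Prop :=
  forall x : X, ~ open (fun y => y = x).

Definition ltrans {X : Type} (mul : X -> X -> X) (x : X) (U : set X) : set X :=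
  fun y => exists u, U u /\ y = mul x u.

Definition O_of {X : Type} (mul : X -> X -> X) (U : set X) : setfam X :=
  fun V => exists x, set_eq V (ltrans mul x U).

Definition O_nbd {X : Type} (open : setfam X) (mul : X -> X -> X) (e : X)
  : setfam X -> Prop :=
  fun F => exists U, open U /\ U e /\ F = O_of mul U.

Definition open_cover {X : Type} (open : setfam X) (F : setfam X) : Prop :=
  (forall U, F U -> open U) /\ (forall x, exists U, F U /\ U x).

(* a setfam is finite up to extensional equality of its members *)
Definition finite_family {X : Type} (F : setfam X) : Prop :=
  exists l : list (set X), forall U, F U -> exists V, In V l /\ set_eq U V.

Definition large_cover {X : Type} (open : setfam X) (F : setfam X) : Prop :=
  open_cover open F /\
  forall x, ~ finite_family (fun U => F U /\ U x).

Definition refines {X : Type} (B A : setfam X) : Prop :=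
  forall V, B V -> exists U, A U /\ subset V U.

Definition pairwise_disjoint_open {X : Type} (open : setfam X) (B : setfam X) : Prop :=
  (forall V, B V -> open V) /\
  (forall V W, B V -> B W -> (exists z, V z /\ W z) -> set_eq V W).

Definition S_c {X : Type} (open : setfam X)
  (A B : setfam X -> Prop) : Prop :=
  forall An : nat -> setfam X, (forall n, A (An n)) ->
    exists Bn : nat -> setfam X,
      (forall n, pairwise_disjoint_open open (Bn n) /\ refines (Bn n) (An n)) /\
      B (fun V => exists n, Bn n V).

(* Main.v *)
Require Import Defs.
From Stdlib Require Import Reals List.
From Stdlib Require Import Lra Lia Classical ClassicalEpsilon.
From Stdlib Require Import Arith.Cantor.
Open Scope R_scope.

Lemma my_choice {A B : Type} (P : A -> B -> Prop) :
  (forall a, exists b, P a b) -> exists f, forall a, P a (f a).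
Proof.
  intro H. exists (fun a => proj1_sig (constructive_indefinite_description _ (H a))).
  intro a. exact (proj2_sig (constructive_indefinite_description _ (H a))).
Qed.

Lemma fwd (X : Type) (open : setfam X)
  (mul : X -> X -> X) (inv : X -> X) (e : X) :
  is_topological_group open mul inv e ->
  metrizable open ->
  no_isolated_points open ->
  S_c open (O_nbd open mul e) (open_cover open) ->
  S_c open (O_nbd open mul e) (large_cover open).
Proof.
  intros [Htop [Hassoc [Hid [Hinv [Hmul Hinvc]]]]]
         [d [Hd0 [Hdeq [Hdsym [Htri Hopen]]]]] Hniso HS An HAn.
  destruct Htop as [HT [Hunion Hinter]].
  assert (inve : inv e = e).
  { rewrite <- (proj2 (Hid (inv e))). exact (proj1 (Hinv e)). }
  assert (cancl : forall x w, mul (inv x) (mul x w) = w).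
  { intros x w. rewrite Hassoc, (proj1 (Hinv x)). apply Hid. }
  assert (grp : forall z a b, mul (mul z a) (mul (inv a) b) = mul z b).
  { intros z a b. rewrite <- Hassoc. f_equal.
    rewrite Hassoc, (proj2 (Hinv a)). apply Hid. }
  assert (ball_open : forall r, open (fun x => d e x < r)).
  { intro r. apply Hopen. intros x Hx. exists (r - d e x). split; [lra|].
    intros y Hy. pose proof (Htri e x y). lra. }
  assert (small : forall W, open W -> W e -> exists V, open V /\ V e /\
            forall a b, V a -> V b -> W (mul (inv a) b)).
  { intros W HW He. assert (Hee : W (mul e e)) by (rewrite (proj1 (Hid e)); exact He).
    destruct (Hmul W e e HW Hee) as [U [V' [HU [HV' [HUe [HVe HUV]]]]]].
    exists (fun x => V' x /\ U (inv x)). split; [|split].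
    - apply Hinter; [exact HV' | apply Hinvc; exact HU].
    - split; [exact HVe | rewrite inve; exact HUe].
    - intros a b [_ Ha] [Hb _]. apply HUV; assumption. }
  assert (HV : forall n, exists V, open V /\ V e /\
     (exists U, An n = O_of mul U /\ forall a b, V a -> V b -> U (mul (inv a) b)) /\
     (forall a b, V a -> V b -> d e (mul (inv a) b) < / INR (S n))).
  { intro n. destruct (HAn n) as [U [HU [HUe HAU]]].
    destruct (small (fun x => U x /\ d e x < / INR (S n))) as [V [HV [HVe HVW]]].
    - apply Hinter; auto.
    - split; auto. rewrite (proj2 (Hdeq e e)) by reflexivity.
      apply Rinv_0_lt_compat, lt_0_INR; lia.
    - exists V. split; auto. split; auto. split.
      + exists U. split; auto. intros a b Ha Hb. apply (HVW a b Ha Hb).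
      + intros a b Ha Hb. apply (HVW a b Ha Hb). }
  destruct (my_choice _ HV) as [Vf HVf].
  assert (HB : forall k, exists Bk : nat -> setfam X,
     (forall j, pairwise_disjoint_open open (Bk j) /\
                refines (Bk j) (O_of mul (Vf (to_nat (k, j))))) /\
     open_cover open (fun V => exists j, Bk j V)).
  { intro k. apply HS. intro j. exists (Vf (to_nat (k, j))).
    destruct (HVf (to_nat (k, j))) as [h1 [h2 _]]. auto. }
  destruct (my_choice _ HB) as [Bf HBf].
  pose (Btot := fun m => Bf (fst (of_nat m)) (snd (of_nat m))).
  assert (HBopen : forall m W, Btot m W -> open W).
  { intros m W HW. destruct (HBf (fst (of_nat m))) as [H1 _].
    exact (proj1 (proj1 (H1 _)) W HW). }
  exists Btot. split.
  - intro m. destruct (HBf (fst (of_nat m))) as [H1 _].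
    destruct (H1 (snd (of_nat m))) as [Hpd Href]. split; [exact Hpd|].
    rewrite <- surjective_pairing, cancel_to_of in Href.
    intros W HW. destruct (Href W HW) as [Y [[z Hz] HWY]].
    destruct (HVf m) as [_ [HVe [[U [HAU HVU]] _]]].
    exists (ltrans mul z U). rewrite HAU. split.
    + exists z. intro; tauto.
    + intros x Hx. apply HWY in Hx. apply Hz in Hx. destruct Hx as [u [Hu ->]].
      exists u. split; auto. specialize (HVU e u HVe Hu).
      rewrite inve, (proj1 (Hid u)) in HVU. exact HVU.
  - split.
    + split.
      * intros W [m HW]. exact (HBopen m W HW).
      * intro x. destruct (HBf 0%nat) as [_ [_ Hc]].
        destruct (Hc x) as [W [[j Hj] Hx]]. exists W. split; auto.
        exists (to_nat (0%nat, j)). unfold Btot. rewrite cancel_of_to. simpl. exact Hj.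
    + intros x [l Hl].
      assert (Hball : exists eps, 0 < eps /\ forall z, d x z < eps -> forall V, In V l ->
                (exists U, (exists m, Btot m U) /\ U x /\ set_eq U V) -> V z).
      { clear Hl. induction l as [|a l IHl].
        - exists 1. split; [lra|]. intros z _ V [].
        - destruct IHl as [eps [Heps Hz]].
          destruct (classic (exists U, (exists m, Btot m U) /\ U x /\ set_eq U a)) as [HP|HnP].
          + destruct HP as [U [[m Hm] [HUx HUa]]].
            pose proof (proj1 (Hopen U) (HBopen m U Hm)) as HUo.
            destruct (HUo x HUx) as [e2 [He2 Hb]].
            exists (Rmin eps e2). split; [apply Rmin_pos; auto|].
            intros z Hzd V [<-|Hin] HPV.
            * apply HUa, Hb. pose proof (Rmin_r eps e2); lra.
            * apply (Hz z); auto. pose proof (Rmin_l eps e2); lra.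
          + exists eps. split; auto. intros z Hzd V [<-|Hin] HPV.
            * contradiction.
            * apply Hz; auto. }
      destruct Hball as [eps [Heps Hball]].
      assert (Hy : exists y, d x y < eps /\ y <> x).
      { apply NNPP. intro Hno. apply (Hniso x). apply Hopen. intros x' Hx'. subst x'.
        exists eps. split; auto. intros y Hy. apply NNPP. intro Hne. apply Hno.
        exists y. auto. }
      destruct Hy as [y [Hxy Hyx]].
      pose (c := mul (inv x) y).
      assert (Hxc : mul x c = y).
      { unfold c. rewrite Hassoc, (proj2 (Hinv x)). apply Hid. }
      assert (Hc : 0 < d e c).
      { assert (d e c <> 0).
        { intro H0. apply Hdeq in H0. apply Hyx. rewrite <- Hxc, <- H0. apply Hid. }
        pose proof (Hd0 e c). lra. }
      destruct (archimed_cor1 (d e c) Hc) as [N [HN HN0]].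
      destruct (HBf N) as [Hrefs [_ Hcov]].
      destruct (Hcov x) as [W [[j Hj] HWx]].
      assert (HWF : exists m, Btot m W).
      { exists (to_nat (N, j)). unfold Btot. rewrite cancel_of_to. simpl. exact Hj. }
      destruct (Hl W (conj HWF HWx)) as [V [Hin HWV]].
      assert (HWy : W y).
      { apply HWV. apply (Hball y Hxy V Hin). exists W. split; auto. }
      destruct (proj2 (Hrefs j) W Hj) as [Y [[z Hz] HWY]].
      apply HWY, Hz in HWx. apply HWY, Hz in HWy.
      destruct HWx as [a [Ha Hxa]]. destruct HWy as [b [Hb Hyb]].
      set (m := to_nat (N, j)) in *.
      destruct (HVf m) as [_ [_ [_ Hsmall]]].
      specialize (Hsmall a b Ha Hb).
      assert (Hcw : c = mul (inv a) b).
      { unfold c. rewrite Hyb.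
        rewrite <- (grp z a b), <- Hxa. apply cancl. }
      rewrite <- Hcw in Hsmall.
      assert (HmN : (N <= m)%nat).
      { unfold m. pose proof (to_nat_non_decreasing N j). lia. }
      assert (/ INR (S m) < / INR N).
      { apply Rinv_lt_contravar.
        - apply Rmult_lt_0_compat; apply lt_0_INR; lia.
        - apply lt_INR. lia. }
      lra.
Qed.

Theorem theorem3p6 (X : Type) (open : setfam X)
  (mul : X -> X -> X) (inv : X -> X) (e : X) :
  is_topological_group open mul inv e ->
  metrizable open ->
  no_isolated_points open ->
  (S_c open (O_nbd open mul e) (open_cover open) <->
   S_c open (O_nbd open mul e) (large_cover open)).
Proof.
  intros Hg Hm Hn. split.
  - apply (fwd X open mul inv e); assumption.
  - intros H An HAn. destruct (H An HAn) as [Bn [H1 H2]].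
    exists Bn. split; [exact H1 | exact (proj1 H2)].
Qed.
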